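(* Every chandelier is a restricted frame graph.
   Context: A chandelier is a graph obtained from a tree $T$ by adding a new vertex adjacent to every leaf of $T$. A frame is the boundary of an axis-parallel box $I\times J\subset\mathbb R^2$. A graph $G$ is a restricted frame graph if there is a family of frames $\{F_v : v\in V(G)\}$ with $uv\in E(G)$ iff $F_u\cap F_v\neq\emptyset$, satisfying: (1) corners of a frame do not coincide with any point of another frame; (2) the left side of any frame does not intersect any other frame; (3) if the right side of a frame intersects a second frame, this right side intersects both the top and the bottom side of the second frame; (4) if two frames have non-empty intersection, then no frame is entirely contained in the intersection of the two regions bounded by these two frames. *)

(* Defs.v *)
From HB Require Import structures.
From mathcomp Require Import all_boot all_order all_algebra.
From mathcomp Require Import reals.
Set Implicit Arguments. Unset Strict Implicit. Unset Printing Implicit Defensive.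
Import Order.TTheory GRing.Theory Num.Theory.
Local Open Scope ring_scope.

Section Graphs.
Variables (V : finType) (e : rel V).

Definition connected_on (S : {set V}) : Prop :=
  forall x y, x \in S -> y \in S ->
    exists p : seq V, [/\ path e x p, last x p = y & all (fun z => z \in S) p].

Definition acyclic_on (S : {set V}) : Prop :=
  forall c : seq V, all (fun z => z \in S) c -> uniq c -> (3 <= size c)%N -> ~~ cycle e c.

Definition is_tree_on (S : {set V}) : Prop :=
  S != set0 /\ connected_on S /\ acyclic_on S.

Definition leaf_on (S : {set V}) (x : V) : bool :=
  (x \in S) && (#|[set y in S | e x y]| == 1)%N.

Definition chandelier : Prop :=
  exists r : V, is_tree_on [set~ r] /\
    forall x, x != r -> (e r x <-> leaf_on [set~ r] x).
End Graphs.

Record frame (R : realType) := Frame { fl : R; fr : R; fb : R; ft : R }.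

Section Frames.
Variable R : realType.
Implicit Types (F : frame R) (p : R * R).

Definition on_left F p := p.1 = fl F /\ fb F <= p.2 <= ft F.
Definition on_right F p := p.1 = fr F /\ fb F <= p.2 <= ft F.
Definition on_bottom F p := p.2 = fb F /\ fl F <= p.1 <= fr F.
Definition on_top F p := p.2 = ft F /\ fl F <= p.1 <= fr F.
Definition on_frame F p := on_left F p \/ on_right F p \/ on_bottom F p \/ on_top F p.
Definition in_box F p := (fl F <= p.1 <= fr F) /\ (fb F <= p.2 <= ft F).
Definition corner F p := (p.1 = fl F \/ p.1 = fr F) /\ (p.2 = fb F \/ p.2 = ft F).

Definition meets (A B : R * R -> Prop) := exists p, A p /\ B p.

Definition restricted_frame_rep (V : finType) (e : rel V) (F : V -> frame R) : Prop :=
      (forall v, fl (F v) < fr (F v) /\ fb (F v) < ft (F v)) /\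
      (forall u v, u != v -> (e u v <-> meets (on_frame (F u)) (on_frame (F v)))) /\
      (forall u v, u != v -> forall p, corner (F u) p -> ~ on_frame (F v) p) /\
      (forall u v, u != v -> ~ meets (on_left (F u)) (on_frame (F v))) /\
      (forall u v, u != v -> meets (on_right (F u)) (on_frame (F v)) ->
        meets (on_right (F u)) (on_top (F v)) /\ meets (on_right (F u)) (on_bottom (F v))) /\
      (forall u v, u != v -> meets (on_frame (F u)) (on_frame (F v)) ->
        forall w, ~ (forall p, on_frame (F w) p -> in_box (F u) p /\ in_box (F v) p)).

Definition restricted_frame_graph (V : finType) (e : rel V) : Prop :=
  exists F : V -> frame R, restricted_frame_rep e F.
End Frames.

(* Main.v *)
Require Import Defs.
From HB Require Import structures.
From mathcomp Require Import all_boot all_order all_algebra.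
From mathcomp Require Import reals.
From mathcomp Require Import ring lra zify.
Set Implicit Arguments. Unset Strict Implicit. Unset Printing Implicit Defensive.

Section Comb.
Variables (V : finType) (e : rel V) (S : {set V}).
Hypothesis esym : symmetric e.
Hypothesis acyc : acyclic_on e S.

Definition inS := (fun z : V => z \in S).

Lemma uniq_path x0 p q :
  path e x0 p -> path e x0 q -> last x0 p = last x0 q ->
  uniq (x0 :: p) -> uniq (x0 :: q) -> all inS (x0 :: p) -> all inS (x0 :: q) -> p = q.
Proof.
elim: p x0 q => [|a p' IH] x0 q.
  case: q => [//|b q'] _ _ /= hl _ /andP[hx0 _] _ _.
  by move: hx0; rewrite hl mem_last.
case: q => [|b q'].
  move=> _ _ /= hl /andP[hx0 _] _ _ _.
  by move: hx0; rewrite -hl mem_last.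
move=> hp hq hl up uq ap aq.
have [ab|ab] := eqVneq a b.
  subst b; congr (_ :: _); apply: (IH a) => //.
  - by case/andP: hp.
  - by case/andP: hq.
  - by case/andP: up.
  - by case/andP: uq.
  - by case/andP: ap.
  - by case/andP: aq.
exfalso.
move: hp hl up ap; move Epp: (a :: p') => pp hp hl up ap.
move: hq hl uq aq; move Eqq: (b :: q') => qq hq hl uq aq.
have hz : has (fun z => z \in pp) qq.
  apply/hasP; exists (last x0 qq); first by rewrite -Eqq /= mem_last.
  by rewrite -hl -Epp /= mem_last.
move: hq hl uq aq Eqq; case: (split_find hz) => z q1 q2 zp nq1 hq hl uq aq eqq.
move: hp hl up ap Epp nq1; case/splitPr: zp => p1 p2 hp hl up ap epp nq1.
have ux0 := up; have uy0 := uq.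
move: up uq => /= /andP[x0p up] /andP[x0q uq].
have nq1' : forall y, y \in q1 -> y \notin p1 ++ z :: p2.
  by move=> y yq; apply: contra nq1 => yp; apply/hasP; exists y.
pose c := x0 :: p1 ++ z :: rev q1.
have hall : all inS c.
  rewrite /= (allP ap x0 (mem_head _ _)) /=.
  move: ap aq => /= /andP[_ ap] /andP[_ aq].
  rewrite all_cat /= all_rev; apply/and3P; split.
  + by apply/allP => y yp; apply: (allP ap); rewrite mem_cat yp.
  + by apply: (allP ap); rewrite mem_cat inE eqxx orbT.
  + by apply/allP => y yp; apply: (allP aq); rewrite mem_cat mem_rcons inE yp orbT.
have hu : uniq c.
  rewrite /= mem_cat inE negb_or mem_rev; apply/andP; split.
    rewrite negb_or; apply/and3P; split.
    + by apply: contra x0p; rewrite mem_cat => ->.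
    + by apply: contra x0p => /eqP <-; rewrite mem_cat inE eqxx orbT.
    + by apply: contra x0q => hx; rewrite mem_cat mem_rcons inE hx orbT.
  move: up; rewrite !cat_uniq /= rev_uniq mem_rev => /and3P[u1 /norP[zp1 _] /andP[zp2 _]].
  rewrite u1 negb_or (negbTE zp1) /=; apply/and3P; split.
  + apply/hasPn => y; rewrite mem_rev => yq; apply/negP => yp1.
    by have := nq1' y yq; rewrite mem_cat yp1.
  + apply/negP => zq; have := nq1' z zq; by rewrite mem_cat inE eqxx orbT.
  + by move: uq; rewrite cat_uniq rcons_uniq => /andP[/andP[_ ->]].
have hs : (3 <= size c)%N.
  rewrite /c; clear hall hu c; rewrite /= size_cat /= size_rev.
  have [/size0nil e1|] := posnP (size p1); last by move=> h; rewrite addnS !ltnS addn_gt0 h.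
  have [/size0nil e2|] := posnP (size q1); last by move=> h; rewrite addnS !ltnS addn_gt0 h orbT.
  by move: epp eqq ab; rewrite e1 e2 /= => -[<- _] [<- _]; rewrite eqxx.
have := acyc hall hu hs; apply/negP.
  rewrite /= rcons_cat /= cat_path /=.
  move: hp; rewrite cat_path /= => /andP[-> /andP[-> _]] /=.
  move: hq; rewrite cat_path => /andP[hq _].
  have := rev_path e x0 (rcons q1 z).
  rewrite last_rcons belast_rcons rev_cons => ->.
  have E : path (fun a b => e b a) x0 (rcons q1 z) = path e x0 (rcons q1 z).
    by apply: eq_path => u v; rewrite /= esym.
  by rewrite negbK E.
Qed.


Definition spath (t x : V) (p : seq V) :=
  [&& path e t p, last t p == x, uniq (t :: p) & all inS p].

Lemma spath_uniq t x p q : t \in S -> spath t x p -> spath t x q -> p = q.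
Proof.
move=> tS /and4P[h1 /eqP h2 h3 h4] /and4P[g1 /eqP g2 g3 g4].
apply: (uniq_path h1 g1) => //; first by rewrite h2 g2.
  by rewrite /= h4 andbT.
by rewrite /= g4 andbT.
Qed.

Lemma spath_exists t x : connected_on e S -> t \in S -> x \in S -> exists p, spath t x p.
Proof.
move=> hc tS xS; have [p [hp hl ha]] := hc t x tS xS.
case: (shortenP hp) hl => p' h1 h2 h3 hl.
exists p'; apply/and4P; split => //; first by rewrite hl.
by apply/allP => y /h3 yp; apply: (allP ha).
Qed.

Lemma spath_prefix t x p1 p2 : t \in S -> spath t x (p1 ++ p2) -> spath t (last t p1) p1.
Proof.
move=> tS /and4P[h1 _ h3 h4]; apply/and4P; split => //.
- by move: h1; rewrite cat_path => /andP[].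
- by move: h3; rewrite -cat_cons cat_uniq => /andP[].
- by move: h4; rewrite all_cat => /andP[].
Qed.

Lemma spath_inS t x p : t \in S -> spath t x p -> x \in S.
Proof.
move=> tS /and4P[_ /eqP <- _ h4].
have := mem_last t p; rewrite inE => /orP[/eqP ->|]//.
by move/(allP h4).
Qed.

Lemma spath_rcons t x p y : spath t x p -> e x y -> y \notin t :: p -> y \in S ->
  spath t y (rcons p y).
Proof.
move=> /and4P[h1 /eqP h2 h3 h4] exy yn yS; apply/and4P; split.
- by rewrite rcons_path h1 h2.
- by rewrite last_rcons.
- by rewrite -rcons_cons rcons_uniq yn.
- by rewrite all_rcons h4 andbT.
Qed.

End Comb.

Section Tree.
Variables (V : finType) (e : rel V) (S : {set V}).
Hypothesis esym : symmetric e.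
Hypothesis eirr : irreflexive e.
Hypothesis acyc : acyclic_on e S.
Variables (t : V) (P : V -> seq V).
Hypothesis tS : t \in S.
Hypothesis hP : forall v, v \in S -> spath e S t v (P v).

Lemma P_uniq v p : v \in S -> spath e S t v p -> P v = p.
Proof. by move=> vS hp; apply: (spath_uniq esym acyc tS (hP vS) hp). Qed.

Lemma P_t : P t = [::].
Proof. by apply: P_uniq => //; rewrite /spath /= eqxx. Qed.

Lemma P_last v : v \in S -> last t (P v) = v.
Proof. by move/hP => /and4P[_ /eqP -> _ _]. Qed.

Lemma P_inj u v : u \in S -> v \in S -> P u = P v -> u = v.
Proof. by move=> uS vS E; rewrite -(P_last uS) -(P_last vS) E. Qed.

Lemma P_pre v p1 p2 : v \in S -> P v = p1 ++ p2 -> P (last t p1) = p1.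
Proof.
move=> vS E; have h := hP vS; rewrite E in h.
have h' := spath_prefix tS h.
by apply: P_uniq => //; apply: spath_inS h'.
Qed.

Lemma P_mem u v : u \in S -> v \in t :: P u -> exists w, P u = P v ++ w.
Proof.
move=> uS hv; move Eu: (P u) hv => pu hv; case/splitPl: hv Eu => p1 p2 hl Eu.
have := P_pre uS Eu; rewrite hl => ->; by exists p2.
Qed.

Lemma P_size v : v \in S -> (size (P v) < #|V|)%N.
Proof.
move/hP => /and4P[_ _ u _].
by have := card_uniqP u; rewrite /= => <-; apply: max_card.
Qed.

Lemma P_child u v : u \in S -> v \in S -> P v = rcons (P u) v -> e u v.
Proof.
move=> uS vS E; have := hP vS; rewrite E => /and4P[h _ _ _].
by move: h; rewrite rcons_path P_last // => /andP[].
Qed.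

Lemma P_edge u v : u \in S -> v \in S -> e u v ->
  P v = rcons (P u) v \/ P u = rcons (P v) u.
Proof.
move=> uS vS euv.
have uv : u != v by apply: contraTneq euv => ->; rewrite eirr.
case: (boolP (v \in t :: P u)) => hv; last first.
  by left; apply: P_uniq => //; apply: (spath_rcons (hP uS)).
case: (boolP (u \in t :: P v)) => hu; last first.
  by right; apply: P_uniq => //; apply: (spath_rcons (hP vS)) => //; rewrite esym.
exfalso; have [w1 E1] := P_mem uS hv; have [w2 E2] := P_mem vS hu.
have : size (P u) = size (P v).
  apply/eqP; rewrite eqn_leq; apply/andP; split.
    by rewrite E2 size_cat leq_addr.
  by rewrite E1 size_cat leq_addr.
rewrite E1 size_cat -{2}(addn0 (size (P v))) => /eqP; rewrite eqn_add2l size_eq0 => /eqP w10.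
move: E1; rewrite w10 cats0 => /(P_inj uS vS) uvE.
by rewrite uvE eqxx in uv.
Qed.

Lemma P_nonleaf u x : u \in S -> x \in S -> u != t -> P x = rcons (P u) x ->
  ~~ leaf_on e S u.
Proof.
move=> uS xS ut Ex.
have [s Eu] : exists s, P u = rcons s u.
  case E: (P u) => [|y s']; first by have := P_last uS; rewrite E /= => h; rewrite h eqxx in ut.
  exists (belast y s'); rewrite lastI; congr rcons; by have := P_last uS; rewrite E.
have hu := hP uS; rewrite Eu in hu.
set p := last t s.
have hux : e u x by apply: P_child.
move: (hu) => /and4P[h1 _ h3 h4].
have hpu : e p u by move: h1; rewrite rcons_path => /andP[].
have pS : p \in S.
  rewrite /p; have := mem_last t s; rewrite inE => /orP[/eqP ->|ps] //.
  by apply: (allP h4); rewrite mem_rcons inE ps orbT.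
have px : p != x.
  have := hP xS; rewrite Ex => /and4P[_ _ hx _].
  move: hx; rewrite -rcons_cons rcons_uniq => /andP[hx _].
  apply: contraNneq hx => <-.
  have := mem_last t s; rewrite !inE => /orP[->//|ps].
  by rewrite Eu mem_rcons inE ps !orbT.
rewrite /leaf_on uS /=; apply/negP => /eqP hc.
have : (#|[set p; x]| <= #|[set y in S | e u y]|)%N.
  apply: subset_leq_card; apply/subsetP => y; rewrite !inE => /orP[] /eqP ->.
    by rewrite pS esym.
  by rewrite xS hux.
by rewrite cards2 px hc.
Qed.

End Tree.

Import Order.TTheory GRing.Theory Num.Theory.
Local Open Scope ring_scope.

Section Geo.
Variable R : realType.
Implicit Types F G W : frame R.

Definition goodf F := fl F < fr F /\ fb F < ft F.
Definition pierce F G := [/\ fl F < fl G, fl G < fr F, fr F < fr G, fb F < fb G & ft G < ft F].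
Definition apart F G :=
  fr F < fl G \/ fr G < fl F \/ ft F < fb G \/ ft G < fb F \/
   (fl F < fl G /\ fr G < fr F /\ fb F < fb G /\ ft G < ft F) \/
   (fl G < fl F /\ fr F < fr G /\ fb G < fb F /\ ft F < ft G).
Definition bad3 F G W := [/\ fl G <= fl W, fr W <= fr F, fb G <= fb W & ft W <= ft G].

Lemma on_frame_box F p : goodf F -> on_frame F p -> in_box F p.
Proof.
rewrite /on_frame /on_left /on_right /on_bottom /on_top /in_box => -[h1 h2].
case=> [[-> ?]|[[-> ?]|[[-> ?]|[-> ?]]]] /=; split=> //; apply/andP; split; lra.
Qed.

Lemma on_frame_cases F p : on_frame F p ->
  p.1 = fl F \/ p.1 = fr F \/ p.2 = fb F \/ p.2 = ft F.
Proof.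
by case=> [[-> ?]|[[-> ?]|[[-> ?]|[-> ?]]]]; auto.
Qed.

Lemma apart_nomeet F G : goodf F -> goodf G -> apart F G ->
  ~ meets (on_frame F) (on_frame G).
Proof.
move=> gF gG ha [p [hF hG]].
have [/andP[a1 a2] /andP[a3 a4]] := on_frame_box gF hF.
have [/andP[b1 b2] /andP[b3 b4]] := on_frame_box gG hG.
have cF := on_frame_cases hF; have cG := on_frame_cases hG.
case: ha => [h|[h|[h|[h|[[h1 [h2 [h3 h4]]]|[h1 [h2 [h3 h4]]]]]]]]; try lra.
Qed.

Lemma pierce_meet F G : goodf F -> goodf G -> pierce F G ->
  meets (on_right F) (on_top G) /\ meets (on_right F) (on_bottom G).
Proof.
move=> [f1 f2] [g1 g2] [h1 h2 h3 h4 h5]; split.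
- exists (fr F, ft G); split; split=> //=; apply/andP; split; lra.
- exists (fr F, fb G); split; split=> //=; apply/andP; split; lra.
Qed.

Lemma corner_frame F p : goodf F -> corner F p -> on_frame F p.
Proof.
move=> [f1 f2] [[e1|e1] [e2|e2]]; rewrite /on_frame /on_left /on_right;
  [left|left|right;left|right;left]; split=> //; rewrite e2; apply/andP; split; lra.
Qed.

Lemma pierce_corner F G : goodf F -> goodf G -> pierce F G ->
  (forall p, corner F p -> ~ on_frame G p) /\ (forall p, corner G p -> ~ on_frame F p).
Proof.
move=> gF gG [h1 h2 h3 h4 h5]; split=> p [c1 c2] hp.
- have [_ /andP[b3 b4]] := on_frame_box gG hp.
  case: c2; lra.
- have cF := on_frame_cases hp.
  have [/andP[b1 b2] _] := on_frame_box gF hp.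
  case: gG => g1 g2.
  case: c1 => e1; case: c2 => e2; case: cF => [e|[e|[e|e]]]; lra.
Qed.

Lemma pierce_left F G : goodf F -> goodf G -> pierce F G ->
  ~ meets (on_left F) (on_frame G) /\ ~ meets (on_left G) (on_frame F).
Proof.
move=> gF gG [h1 h2 h3 h4 h5]; split=> -[p [[e1 /andP[y1 y2]] hp]].
- have [/andP[b1 b2] _] := on_frame_box gG hp; lra.
- have cF := on_frame_cases hp. case: gG => g1 g2. case: cF => [e|[e|[e|e]]]; lra.
Qed.

Lemma pierce_right_rev F G : goodf F -> goodf G -> pierce G F ->
  ~ meets (on_right F) (on_frame G).
Proof.
move=> gF gG [h1 h2 h3 h4 h5] [p [[e1 _] hp]].
have [/andP[b1 b2] _] := on_frame_box gG hp; lra.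
Qed.

Lemma left_frame F p : on_left F p -> on_frame F p.
Proof. by left. Qed.
Lemma right_frame F p : on_right F p -> on_frame F p.
Proof. by right; left. Qed.

Lemma inside_bad3 F G W : goodf W ->
  (forall p, on_frame W p -> in_box F p /\ in_box G p) -> pierce F G -> bad3 F G W.
Proof.
move=> [w1 w2] hW [h1 h2 h3 h4 h5].
have c1 : on_frame W (fl W, fb W) by apply: corner_frame => //; split; left.
have c2 : on_frame W (fr W, ft W) by apply: corner_frame => //; split; right.
have [[/andP[a1 a2] /andP[a3 a4]] [/andP[b1 b2] /andP[b3 b4]]] := hW _ c1.
have [[/andP[d1 d2] /andP[d3 d4]] [/andP[e1 e2] /andP[e3 e4]]] := hW _ c2.
simpl in *; split; lra.
Qed.


Lemma apart_sym F G : apart F G -> apart G F.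
Proof.
rewrite /apart; case=> [h|[h|[h|[h|[h|h]]]]]; tauto.
Qed.

Lemma apart_pierce F G : goodf F -> goodf G -> apart F G -> ~ pierce F G.
Proof.
move=> gF gG ha hp; apply: (apart_nomeet gF gG ha).
have [[p [h1 h2]] _] := pierce_meet gF gG hp.
by exists p; split; [right; left| right; right; right].
Qed.

Lemma rep_of (V : finType) (e : rel V) (F : V -> frame R) :
  (forall v, goodf (F v)) ->
  (forall u v, u != v -> pierce (F u) (F v) \/ pierce (F v) (F u) \/ apart (F u) (F v)) ->
  (forall u v, u != v -> e u v <-> (pierce (F u) (F v) \/ pierce (F v) (F u))) ->
  (forall u v w, u != v -> pierce (F u) (F v) -> ~ bad3 (F u) (F v) (F w)) ->
  restricted_frame_rep e F.
Proof.
move=> hg hc he hb.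
have meetE : forall u v, u != v -> meets (on_frame (F u)) (on_frame (F v)) ->
    pierce (F u) (F v) \/ pierce (F v) (F u).
  move=> u v uv hm; case: (hc u v uv) => [h|[h|h]]; [by left|by right|].
  by case: (apart_nomeet (hg u) (hg v) h hm).
have pm : forall u v, pierce (F u) (F v) \/ pierce (F v) (F u) ->
    meets (on_frame (F u)) (on_frame (F v)).
  move=> u v [h|h].
    have [[p [h1 h2]] _] := pierce_meet (hg u) (hg v) h.
    by exists p; split; [right; left| right; right; right].
  have [[p [h1 h2]] _] := pierce_meet (hg v) (hg u) h.
  by exists p; split; [right; right; right| right; left].
split; first exact: hg.
split.
  move=> u v uv; rewrite he //; split; first exact: pm.
  exact: meetE.
split.
  move=> u v uv p hp hv.
  case: (hc u v uv) => [h|[h|h]].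
  - exact: ((pierce_corner (hg u) (hg v) h).1 p hp hv).
  - exact: ((pierce_corner (hg v) (hg u) h).2 p hp hv).
  - apply: (apart_nomeet (hg u) (hg v) h); exists p; split => //.
    exact: corner_frame.
split.
  move=> u v uv hm.
  case: (hc u v uv) => [h|[h|h]].
  - exact: ((pierce_left (hg u) (hg v) h).1 hm).
  - exact: ((pierce_left (hg v) (hg u) h).2 hm).
  - apply: (apart_nomeet (hg u) (hg v) h); case: hm => p [h1 h2]; exists p; split => //.
    exact: left_frame.
split.
  move=> u v uv hm.
  have hm' : meets (on_frame (F u)) (on_frame (F v)).
    by case: hm => p [h1 h2]; exists p; split => //; exact: right_frame.
  case: (meetE u v uv hm') => h.
  - exact: pierce_meet (hg u) (hg v) h.
  - by case: (pierce_right_rev (hg u) (hg v) h hm).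
move=> u v uv hm w hw.
case: (meetE u v uv hm) => h.
- exact: (hb u v w uv h (inside_bad3 (hg w) hw h)).
- apply: (hb v u w _ h); first by rewrite eq_sym.
  apply: inside_bad3 (hg w) _ h => p hp; have [? ?] := hw p hp; by split.
Qed.

End Geo.

Section Intervals.
Variables (R : realType) (V : finType).

Definition cn (x : V) : nat := (enum_rank x).+1.
Definition BB : R := (2 * #|V| + 2)%N%:R.
Definition lo (s : seq V) : R := foldr (fun x y => (2 * (cn x)%:R + y) / BB) 0 s.
Definition len (s : seq V) : R := BB ^- size s.
Definition hi (s : seq V) : R := lo s + len s.

Lemma cn_le x : ((cn x)%:R : R) <= (#|V|)%:R.
Proof. by rewrite ler_nat /cn; apply: ltn_ord. Qed.

Lemma cn_ge x : (1 : R) <= (cn x)%:R.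
Proof. by rewrite ler1n. Qed.

Lemma BB_eq : BB = 2 * (#|V|)%:R + 2.
Proof. by rewrite /BB natrD natrM. Qed.

Lemma BB_gt : 2 * (#|V|)%:R + 2 <= BB.
Proof. by rewrite BB_eq. Qed.

Lemma BB_pos : 0 < BB.
Proof. rewrite BB_eq; have : (0 : R) <= (#|V|)%:R by []. lra. Qed.

Lemma lo_cons x s : lo (x :: s) = (2 * (cn x)%:R + lo s) / BB.
Proof. by []. Qed.

Lemma len_cons x s : len (x :: s) = len s / BB.
Proof. by rewrite /len /= exprS invfM mulrC. Qed.

Lemma hi_cons x s : hi (x :: s) = (2 * (cn x)%:R + hi s) / BB.
Proof. by rewrite /hi lo_cons len_cons -mulrDl addrA. Qed.

Lemma len_pos s : 0 < len s.
Proof. by rewrite /len invr_gt0 exprn_gt0 // BB_pos. Qed.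

Lemma lo_ge0 s : 0 <= lo s.
Proof.
elim: s => [|x s IH]; first by rewrite /lo.
rewrite lo_cons divr_ge0 ?(ltW BB_pos) //.
have := cn_ge x; lra.
Qed.

Lemma hi_le1 s : hi s <= 1.
Proof.
elim: s => [|x s IH]; first by rewrite /hi /lo /len /= expr0 invr1 add0r.
rewrite hi_cons ler_pdivrMr ?BB_pos // mul1r.
have := cn_le x; have := BB_gt; lra.
Qed.

Lemma lo_lt_hi s : lo s < hi s.
Proof. by rewrite /hi ltrDl len_pos. Qed.

Lemma child_in s w : lo s < lo (rcons s w) /\ hi (rcons s w) < hi s.
Proof.
elim: s => [|x s [IH1 IH2]].
  rewrite /= /hi /lo /len /= expr0 invr1 add0r expr1 addr0; split.
    by rewrite divr_gt0 ?BB_pos //; have := cn_ge w; lra.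
  have E : 2 * (cn w)%:R / BB + BB^-1 = (2 * (cn w)%:R + 1) / BB.
    by rewrite [RHS]mulrDl mul1r.
  rewrite E.
  rewrite ltr_pdivrMr ?BB_pos // mul1r.
  have := cn_le w; have := BB_gt; lra.
rewrite rcons_cons lo_cons hi_cons lo_cons hi_cons; split.
  by rewrite ltr_pM2r ?invr_gt0 ?BB_pos // ltrD2l.
by rewrite ltr_pM2r ?invr_gt0 ?BB_pos // ltrD2l.
Qed.

Lemma diverge s1 s2 : ~~ prefix s1 s2 -> ~~ prefix s2 s1 ->
  hi s1 < lo s2 \/ hi s2 < lo s1.
Proof.
elim: s1 s2 => [|x s1 IH] [|y s2] //.
rewrite !prefix_cons => h1 h2.
have [exy|nxy] := eqVneq x y.
  subst y; rewrite eqxx /= in h1 h2.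
  rewrite !hi_cons !lo_cons.
  case: (IH s2 h1 h2) => h; [left|right];
    by rewrite ltr_pM2r ?invr_gt0 ?BB_pos // ltrD2l.
have cne : cn x != cn y.
  by apply: contra nxy => /eqP [] /val_inj /enum_rank_inj ->.
rewrite !hi_cons !lo_cons.
have H1 := hi_le1 s1; have H2 := hi_le1 s2; have G1 := lo_ge0 s1; have G2 := lo_ge0 s2.
have [lt|lt] : (cn x < cn y)%N \/ (cn y < cn x)%N.
  by move: cne; rewrite neq_ltn => /orP.
- left; rewrite ltr_pM2r ?invr_gt0 ?BB_pos //.
  have : ((cn x).+1%:R : R) <= (cn y)%:R by rewrite ler_nat.
  rewrite -addn1 natrD; lra.
- right; rewrite ltr_pM2r ?invr_gt0 ?BB_pos //.
  have : ((cn y).+1%:R : R) <= (cn x)%:R by rewrite ler_nat.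
  rewrite -addn1 natrD; lra.
Qed.

Lemma len_mono s1 s2 : (size s1 < size s2)%N -> len s2 < len s1.
Proof.
move=> hs; rewrite /len ltf_pV2 ?exprn_gt0 ?BB_pos //.
rewrite ltr_eXn2l // ?BB_eq; first by have : (0 : R) <= (#|V|)%:R by []; lra.
all: by rewrite posrE exprn_gt0 // BB_pos.
Qed.

End Intervals.

Section Main.
Variables (R : realType) (V : finType) (e : rel V) (r t : V) (P : V -> seq V).
Hypothesis esym : symmetric e.
Hypothesis eirr : irreflexive e.
Hypothesis acyc : acyclic_on e [set~ r].
Hypothesis tS : t \in [set~ r].
Hypothesis hP : forall v, v \in [set~ r] -> spath e [set~ r] t v (P v).
Hypothesis hr : forall x, x != r -> (e r x <-> leaf_on e [set~ r] x).

Let S := [set~ r].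
Lemma Psize v : v \in S -> (size (P v) < #|V|)%N.
Proof. by move=> h; apply: (P_size hP h). Qed.
Lemma Pt : P t = [::].
Proof. by apply: (P_t esym acyc tS hP). Qed.
Lemma Plast v : v \in S -> last t (P v) = v.
Proof. by move=> h; apply: (P_last hP h). Qed.
Lemma Pinj u v : u \in S -> v \in S -> P u = P v -> u = v.
Proof. by move=> hu hv; apply: (P_inj hP hu hv). Qed.
Lemma Ppre v p1 p2 : v \in S -> P v = p1 ++ p2 -> P (last t p1) = p1.
Proof. by apply: (P_pre esym acyc tS hP). Qed.
Lemma Pchild u v : u \in S -> v \in S -> P v = rcons (P u) v -> e u v.
Proof. by move=> hu hv; apply: (P_child hP hu hv). Qed.
Lemma Pedge u v : u \in S -> v \in S -> e u v ->
  P v = rcons (P u) v \/ P u = rcons (P v) u.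
Proof. by apply: (P_edge esym eirr acyc tS hP). Qed.
Lemma Pnonleaf u x : u \in S -> x \in S -> u != t -> P x = rcons (P u) x ->
  ~~ leaf_on e S u.
Proof. by apply: (P_nonleaf esym tS hP). Qed.

Definition lf v := leaf_on e [set~ r] v.
Definition Nn : R := (#|V|)%:R.
Definition dp v : R := (size (P v))%:R.
Definition Fr : frame R :=
  Frame (if lf t then 1/2 else -1) (Nn + 2) (if lf t then -1 else -3) (if lf t then 2 else 4).
Definition Fs v : frame R :=
  Frame (dp v) (if (v != t) && lf v then Nn + 3 else dp v + 3/2)
        (if v == t then -2 else lo R (P v)) (if v == t then 3 else hi R (P v)).
Definition Fv v := if v == r then Fr else Fs v.

Lemma inSr v : v != r -> v \in [set~ r].
Proof. by rewrite !inE. Qed.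

Lemma Fv_r : Fv r = Fr.
Proof. by rewrite /Fv eqxx. Qed.

Lemma Fv_S v : v != r -> Fv v = Fs v.
Proof. by rewrite /Fv => /negbTE ->. Qed.

Lemma tr : t != r.
Proof. by move: tS; rewrite !inE. Qed.

Lemma dp_ge0 v : 0 <= dp v.
Proof. by rewrite /dp. Qed.

Lemma dp_lt v : v != r -> dp v + 1 <= Nn.
Proof.
move=> vr; have := Psize (inSr vr).
by rewrite /dp /Nn natr1 ler_nat.
Qed.

Lemma dp_t : dp t = 0.
Proof. by rewrite /dp Pt. Qed.

Lemma dp_ge1 v : v != r -> v != t -> 1 <= dp v.
Proof.
move=> vr vt; rewrite /dp ler1n lt0n size_eq0; apply: contra vt => /eqP E.
have := Plast (inSr vr); rewrite E /= => ->; by [].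
Qed.

Lemma Nn_ge0 : 0 <= Nn.
Proof. by rewrite /Nn. Qed.

Lemma good_all v : goodf (Fv v).
Proof.
have := Nn_ge0.
have [->|vr] := eqVneq v r.
  by rewrite Fv_r /goodf /Fr /=; case: (lf t) => /=; split; lra.
rewrite Fv_S // /goodf /Fs /=.
have := dp_lt vr; have := dp_ge0 v; have := lo_lt_hi R (P v).
by case: (_ && _); case: (v == t); split; lra.
Qed.


Definition Good u v :=
  (e u v /\ (pierce (Fv u) (Fv v) \/ pierce (Fv v) (Fv u))) \/ (~ e u v /\ apart (Fv u) (Fv v)).

Lemma Good_sym u v : Good u v -> Good v u.
Proof.
rewrite /Good esym; case=> [[h1 h2]|[h1 h2]]; [left|right]; split => //.
  by case: h2; tauto.
exact: apart_sym.
Qed.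

Lemma PinS v x : v \in S -> x \in P v -> x \in S.
Proof. by move=> /hP /and4P[_ _ _ /allP h] /h. Qed.

Lemma lo_ge0' (s : seq V) : 0 <= lo R s. Proof. exact: lo_ge0. Qed.
Lemma hi_le1' (s : seq V) : hi R s <= 1. Proof. exact: hi_le1. Qed.

Lemma Good_r v : v != r -> Good r v.
Proof.
move=> vr; rewrite /Good Fv_r (Fv_S vr) hr // -/(lf v).
have N0 := Nn_ge0.
have [vt|vt] := eqVneq v t.
  subst v; rewrite /Fs /Fr /= eqxx /= dp_t.
  case: (lf t) => /=.
    by left; split => //; right; rewrite /pierce /=; split; lra.
  right; split => //; rewrite /apart /=; do 4 right; left; split; lra.
have dv1 := dp_ge1 vr vt; have dvN := dp_lt vr.
have l0 := lo_ge0' (P v); have h1 := hi_le1' (P v); have lh := lo_lt_hi R (P v).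
rewrite /Fs /= (negbTE vt) /=.
case E: (lf v) => /=.
  left; split => //; left; rewrite /pierce /=; split; case: (lf t); lra.
right; split => //; rewrite /apart /=.
do 4 right; left; split; [|split; [|split]]; case: (lf t); lra.
Qed.

Definition Xsep u v := exists x, [/\ x \in S, P x = rcons (P u) x & ((size (P u)).+2 <= size (P v))%N].

Lemma cases3 u v : u \in S -> v \in S -> u != v ->
  P v = rcons (P u) v \/ P u = rcons (P v) u \/ Xsep u v \/ Xsep v u \/
     (~~ prefix (P u) (P v) /\ ~~ prefix (P v) (P u)).
Proof.
move=> uS vS uv.
have gen : forall a b, a \in S -> b \in S -> a != b -> prefix (P a) (P b) ->
    P b = rcons (P a) b \/ Xsep a b.
  move=> a b aS bS ab /prefixP [w E].
  case: w E => [|x [|y w]] E.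
  - by move: E; rewrite cats0 => /(Pinj bS aS) ba; rewrite ba eqxx in ab.
  - left; have := Plast bS; rewrite E last_cat /= => xb.
    by rewrite cats1 xb.
  - right; exists x; split.
    + by apply: (PinS bS); rewrite E mem_cat inE eqxx orbT.
    + have E' : P b = (P a ++ [:: x]) ++ y :: w by rewrite E -catA.
      have := Ppre bS E'; rewrite last_cat /= cats1 => ->; by [].
    + by rewrite E size_cat /= !addnS leq_addr.
case: (boolP (prefix (P u) (P v))) => h1.
  by case: (gen u v uS vS uv h1) => h; [left|right; right; left].
case: (boolP (prefix (P v) (P u))) => h2.
  by case: (gen v u vS uS _ h2) => [|h|h]; [rewrite eq_sym|right; left|do 3 right; left].
by do 4 right.
Qed.

Lemma fr_parent u x : u \in S -> x \in S -> P x = rcons (P u) x ->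
  fr (Fs u) = dp u + 3/2.
Proof.
move=> uS xS E; rewrite /Fs /=.
have [->|ut] := eqVneq u t; first by [].
by rewrite /lf (negbTE (Pnonleaf uS xS ut E)) andbF.
Qed.

Lemma Good_a u v : u != r -> v != r -> P v = rcons (P u) v -> Good u v.
Proof.
move=> ur vr E; have uS := inSr ur; have vS := inSr vr.
left; split; first exact: Pchild.
left; rewrite (Fv_S ur) (Fv_S vr).
have vt : v != t.
  by apply/eqP => vt; move: E; rewrite vt Pt; case: (P u).
have dv : dp v = dp u + 1 by rewrite /dp E size_rcons -natr1.
have fru := fr_parent uS vS E.
have dvN := dp_lt vr; have N0 := Nn_ge0.
have frv : dp u + 3/2 < fr (Fs v).
  by rewrite /Fs /=; case: (_ && _); lra.
have [h1 h2] := child_in R (P u) v.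
have l0 := lo_ge0' (P v); have hh := hi_le1' (P v).
rewrite /pierce fru; move: frv; rewrite /Fs /= (negbTE vt) dv.
have [ut|ut] := eqVneq u t; move=> frv; rewrite E in l0 hh *; split; lra.
Qed.

Lemma Good_c u v : u != r -> v != r -> Xsep u v -> Good u v.
Proof.
move=> ur vr [x [xS Ex hs]]; have uS := inSr ur; have vS := inSr vr.
right; split.
  by move=> euv; case: (Pedge uS vS euv) => E; move: hs; rewrite E size_rcons; lia.
left; rewrite (Fv_S ur) (Fv_S vr) (fr_parent uS xS Ex) /Fs /=.
have : (size (P u)).+2%:R <= dp v :> R by rewrite /dp ler_nat.
rewrite /dp -addn2 natrD; lra.
Qed.

Lemma Good_e u v : u != r -> v != r ->
  ~~ prefix (P u) (P v) /\ ~~ prefix (P v) (P u) -> Good u v.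
Proof.
move=> ur vr [h1 h2]; have uS := inSr ur; have vS := inSr vr.
have ut : u != t by apply/eqP => ut; move: h1; rewrite ut Pt prefix0s.
have vt : v != t by apply/eqP => vt; move: h2; rewrite vt Pt prefix0s.
right; split.
  move=> euv; case: (Pedge uS vS euv) => E.
    by move: h1; rewrite E prefix_rcons.
  by move: h2; rewrite E prefix_rcons.
rewrite (Fv_S ur) (Fv_S vr) /apart /Fs /= (negbTE ut) (negbTE vt).
by case: (diverge R h1 h2) => h; [do 2 right; left | do 3 right; left].
Qed.

Lemma Good_all u v : u != v -> Good u v.
Proof.
move=> uv.
have [ur|ur] := eqVneq u r; first by rewrite ur; apply: Good_r; rewrite eq_sym -ur.
have [vr|vr] := eqVneq v r; first by rewrite vr; apply: Good_sym; apply: Good_r.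
case: (cases3 (inSr ur) (inSr vr) uv) => [|[|[|[|]]]].
- exact: Good_a.
- by move=> E; apply: Good_sym; apply: Good_a.
- exact: Good_c.
- by move=> E; apply: Good_sym; apply: Good_c.
- exact: Good_e.
Qed.


Lemma fr_ge w : w != r -> dp w + 3/2 <= fr (Fs w).
Proof.
move=> wr; have := dp_lt wr; rewrite /Fs /=; case: (_ && _) => h; lra.
Qed.

Lemma e_of_pierce u v : u != v -> pierce (Fv u) (Fv v) -> e u v.
Proof.
move=> uv hp; case: (Good_all uv) => [[]//|[_ ha]].
by case: (apart_pierce (good_all u) (good_all v) ha hp).
Qed.

Lemma len_le_size (a b : seq V) : len R a <= len R b -> (size b <= size a)%N.
Proof.
move=> h; rewrite leqNgt; apply/negP => /(len_mono R) h'; lra.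
Qed.

Lemma nobad u v w : u != v -> pierce (Fv u) (Fv v) -> ~ bad3 (Fv u) (Fv v) (Fv w).
Proof.
move=> uv hp; have euv := e_of_pierce uv hp.
have N0 := Nn_ge0.
have [ur|ur] := eqVneq u r.
  subst u; have vr : v != r by rewrite eq_sym.
  have lv : lf v by rewrite /lf -hr.
  move: hp; rewrite Fv_r (Fv_S vr).
  have [vt|vt] := eqVneq v t.
    subst v; rewrite /pierce /Fr /Fs /= lv dp_t => -[h1 _ _ _ _]; lra.
  have dv1 := dp_ge1 vr vt.
  move=> hp [b1 b2 b3 b4]; move: b1 b2 b3 b4 hp.
  rewrite /Fs /= (negbTE vt) lv /=.
  have l0 := lo_ge0' (P v); have lhv := lo_lt_hi R (P v).
  have [wr|wr] := eqVneq w r.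
    by rewrite wr Fv_r /Fr /=; case: (lf t) => /=; lra.
  rewrite (Fv_S wr).
  have [wt|wt] := eqVneq w t.
    by rewrite wt /Fs /= eqxx /=; lra.
  have lhw := lo_lt_hi R (P w).
  rewrite /Fs /= (negbTE wt) /= => b1 b2 b3 b4 _.
  have wS := inSr wr; have vS := inSr vr.
  case: (boolP (prefix (P v) (P w))) => [/prefixP [z Ez]|np1].
    case: z Ez => [|x z] Ez.
      move: Ez; rewrite cats0 => /(Pinj wS vS) wv; subst w.
      by move: b2; rewrite lv; lra.
    have E' : P w = (P v ++ [:: x]) ++ z by rewrite Ez -catA.
    have Px := Ppre wS E'; rewrite last_cat /= cats1 in Px.
    have xS : x \in S by apply: (PinS wS); rewrite Ez mem_cat inE eqxx orbT.
    by move: lv; rewrite /lf (negbTE (Pnonleaf vS xS vt Px)).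
  case: (boolP (prefix (P w) (P v))) => [/prefixP [z Ez]|np2].
    case: z Ez => [|x z] Ez.
      move: Ez; rewrite cats0 => /(Pinj vS wS) wv; subst w.
      by move: b2; rewrite lv; lra.
    have : (size (P w) < size (P v))%N by rewrite Ez size_cat /= addnS ltnS leq_addr.
    rewrite ltnNge => /negP; apply; apply: len_le_size.
    move: b3 b4; rewrite /hi; lra.
  by case: (diverge R np1 np2) => h; lra.
have [vr|vr] := eqVneq v r.
  subst v.
  have lu : lf u by rewrite /lf -hr // esym.
  move: hp; rewrite Fv_r (Fv_S ur).
  have [ut|ut] := eqVneq u t; last first.
    have du1 := dp_ge1 ur ut.
    by rewrite /pierce /Fr /= => -[h1 _ _ _ _]; move: h1; case: (lf t); lra.
  subst u; rewrite /Fs /Fr /= lu eqxx /= dp_t => hp [b1 b2 b3 b4]; move: b1 b2 b3 b4.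
  have [wr|wr] := eqVneq w r.
    by rewrite wr Fv_r /Fr /= lu; lra.
  rewrite (Fv_S wr).
  have [wt|wt] := eqVneq w t.
    by rewrite wt /Fs /= dp_t; lra.
  have := fr_ge wr; have := dp_ge1 wr wt; rewrite /=; lra.
have uS := inSr ur; have vS := inSr vr.
case: (Pedge uS vS euv) => E; last first.
  move: hp; rewrite (Fv_S ur) (Fv_S vr) /pierce /= => -[h1 _ _ _ _]; move: h1.
  by rewrite /dp E size_rcons -natr1; lra.
have vt : v != t.
  by apply/eqP => vt; move: E; rewrite vt Pt; case: (P u).
have dv : dp v = dp u + 1 by rewrite /dp E size_rcons -natr1.
rewrite (Fv_S ur) (Fv_S vr) => -[b1 b2 b3 b4]; move: b1 b2 b3 b4; rewrite (fr_parent uS vS E).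
rewrite /Fs /= (negbTE vt) /=.
have l0 := lo_ge0' (P v); have hh := hi_le1' (P v).
have [wr|wr] := eqVneq w r.
  by rewrite wr Fv_r /Fr /=; case: (lf t) => /=; lra.
rewrite (Fv_S wr).
have [wt|wt] := eqVneq w t.
  by rewrite wt /Fs /= eqxx /=; lra.
have frw := fr_ge wr.
rewrite /Fs /= (negbTE wt) /= => b1 b2 b3 b4.
have : (size (P v) <= size (P w))%N.
  by apply: len_le_size; move: b3 b4; rewrite /hi; lra.
rewrite -(ler_nat R) -/(dp v) -/(dp w) => h.
move: b2 frw; rewrite /Fs /= (negbTE wt) /=; lra.
Qed.

End Main.

Close Scope ring_scope.
Unset Implicit Arguments.

Theorem lemma3p1 (R : realType) (V : finType) (e : rel V) :
  symmetric e -> irreflexive e -> chandelier e -> restricted_frame_graph R e.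
Proof.
move=> esym eirr [r [[hne [hconn hacyc]] hr]].
have [t tS] := set0Pn _ hne.
have exP : forall v, exists p, (v \notin [set~ r]) || spath e [set~ r] t v p.
  move=> v; case: (boolP (v \in [set~ r])) => vS /=; last by exists [::].
  by have [p hp] := spath_exists hconn tS vS; exists p; rewrite hp.
pose P v := xchoose (exP v).
have hP : forall v, v \in [set~ r] -> spath e [set~ r] t v (P v).
  move=> v vS; have := xchooseP (exP v); by case/orP => //; rewrite vS.
exists (Fv R e r t P).
apply: rep_of.
- exact: (good_all R hP).
- move=> u v uv.
  case: (Good_all R esym eirr hacyc tS hP hr uv) => [[_ h]|[_ h]]; last by right; right.
  by case: h; [left|right; left].
- move=> u v uv; split.
    by case: (Good_all R esym eirr hacyc tS hP hr uv) => [[_ h]|[h _]].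
  case: (Good_all R esym eirr hacyc tS hP hr uv) => [[h _]//|[_ ha]] hp.
  case: hp => hp.
    by case: (apart_pierce (good_all R hP u) (good_all R hP v) ha hp).
  by case: (apart_pierce (good_all R hP v) (good_all R hP u) (apart_sym ha) hp).
- move=> u v w uv hp; exact: (nobad esym eirr hacyc tS hP hr uv hp).
Qed.
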